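(* With $T^+_{\mathrm{vl}},S^+_{\mathrm{vl}}$ as in the context, for all real $\gamma>0$, $M$, $a$ one has $$(T^+_{\mathrm{vl}})^2-4S^+_{\mathrm{vl}}=\frac{a^2(M+1)^2}{64\gamma^2(\gamma+1)^2}\,H(\gamma,M),$$ where $$\begin{aligned}H(\gamma,M)={}&(\gamma-1)^2\gamma^2M^6+(-2\gamma^4+4\gamma^3-2\gamma^2)M^5+(-5\gamma^4-2\gamma^3+19\gamma^2-12\gamma)M^4\\&+(20\gamma^4-44\gamma^2+24\gamma)M^3+(-13\gamma^4+26\gamma^3+39\gamma^2-24\gamma+36)M^2\\&+(-42\gamma^4-20\gamma^3-50\gamma^2-72\gamma-72)M+(57\gamma^4+26\gamma^3+53\gamma^2+84\gamma+36).\end{aligned}$$ Moreover $H(\gamma,M)>0$ for all $\gamma\in(1,3)$ and all $M\in[-1,1]$.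
   Context: Define, for real $\gamma,M,a$ with $\gamma>0$, $$T^+_{\mathrm{vl}}=\frac{a}{8\gamma(\gamma+1)}\Bigl[9\gamma(\gamma+1)-(\gamma-1)\gamma M^4+2(2\gamma^2+\gamma-3)M^2+12\gamma(\gamma+1)M+6\Bigr],$$ $$S^+_{\mathrm{vl}}=-\frac{a^2(M+1)^3}{32\gamma(\gamma+1)}\Bigl[-3\gamma^2-14\gamma+4(\gamma-1)\gamma M^2+(-9\gamma^2+10\gamma+3)M-3\Bigr].$$ *)

(* Defs.v *)
From Stdlib Require Import Reals.
Open Scope R_scope.

Definition Tvl (g M a : R) : R :=
  a / (8 * g * (g + 1)) *
  (9 * g * (g + 1) - (g - 1) * g * M ^ 4 + 2 * (2 * g ^ 2 + g - 3) * M ^ 2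
   + 12 * g * (g + 1) * M + 6).

Definition Svl (g M a : R) : R :=
  - (a ^ 2 * (M + 1) ^ 3) / (32 * g * (g + 1)) *
  (- 3 * g ^ 2 - 14 * g + 4 * (g - 1) * g * M ^ 2
   + (- 9 * g ^ 2 + 10 * g + 3) * M - 3).

Definition Hpoly (g M : R) : R :=
  (g - 1) ^ 2 * g ^ 2 * M ^ 6
  + (- 2 * g ^ 4 + 4 * g ^ 3 - 2 * g ^ 2) * M ^ 5
  + (- 5 * g ^ 4 - 2 * g ^ 3 + 19 * g ^ 2 - 12 * g) * M ^ 4
  + (20 * g ^ 4 - 44 * g ^ 2 + 24 * g) * M ^ 3
  + (- 13 * g ^ 4 + 26 * g ^ 3 + 39 * g ^ 2 - 24 * g + 36) * M ^ 2
  + (- 42 * g ^ 4 - 20 * g ^ 3 - 50 * g ^ 2 - 72 * g - 72) * M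
  + (57 * g ^ 4 + 26 * g ^ 3 + 53 * g ^ 2 + 84 * g + 36).

(* Main.v *)
Require Import Defs.
From Stdlib Require Import Reals Lra Psatz.
Open Scope R_scope.
Lemma pos (g M : R) : 1 < g < 3 -> -1 <= M <= 1 -> 0 < Hpoly g M.
Proof. intros [h1 h2] [m1 m2].
set (s := g - 1). set (t := 1 - M).
assert (hs : 0 < s) by (unfold s; lra). assert (ht0 : 0 <= t) by (unfold t; lra).
assert (ht2 : t <= 2) by (unfold t; lra).
assert (E : Hpoly g M = (64+128*t+64*t^2) + s*(192+192*t+128*t^2-16*t^3)
  + s^2*(208+128*t+160*t^2-8*t^3-12*t^4-4*t^5+t^6)
  + s^3*(96+96*t+72*t^2+8*t^3-12*t^4-8*t^5+2*t^6)
  + s^4*(16+32*t+12*t^2-4*t^5+t^6)).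
{ unfold Hpoly, s, t. ring. }
rewrite E.
assert (t2 : 0 <= t^2) by nra.
assert (t3 : t^3 <= 2*t^2) by (simpl; nra).
assert (t4 : t^4 <= 2*t^3) by (simpl; nra).
assert (t5 : t^5 <= 2*t^4) by (simpl; nra).
assert (t6 : 0 <= t^6) by (replace (t^6) with ((t^3)^2) by ring; nra).
assert (P1 : 0 < 192+192*t+128*t^2-16*t^3) by nra.
assert (P2 : 0 < 208+128*t+160*t^2-8*t^3-12*t^4-4*t^5+t^6) by nra.
assert (P3 : 0 < 96+96*t+72*t^2+8*t^3-12*t^4-8*t^5+2*t^6) by nra.
assert (P4 : 0 < 16+32*t+12*t^2-4*t^5+t^6) by nra.
assert (0 < s^2) by nra. assert (0 < s^3) by (simpl; nra). assert (0 < s^4) by (simpl; nra).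
assert (0 < s*(192+192*t+128*t^2-16*t^3)) by nra.
assert (0 < s^2*(208+128*t+160*t^2-8*t^3-12*t^4-4*t^5+t^6)) by nra.
assert (0 < s^3*(96+96*t+72*t^2+8*t^3-12*t^4-8*t^5+2*t^6)) by nra.
assert (0 < s^4*(16+32*t+12*t^2-4*t^5+t^6)) by nra.
nra.
Qed.

Theorem mainTheorem6 :
  (forall g M a : R, 0 < g ->
     (Tvl g M a) ^ 2 - 4 * Svl g M a =
     a ^ 2 * (M + 1) ^ 2 / (64 * g ^ 2 * (g + 1) ^ 2) * Hpoly g M) /\
  (forall g M : R, 1 < g < 3 -> -1 <= M <= 1 -> 0 < Hpoly g M).
Proof.
split.
- intros g M a hg. unfold Tvl, Svl, Hpoly. field. lra.
- exact pos.
Qed.
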